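(* Assume the Setting and consider Algorithm 2 with $0<\mu_0<4\sigma(1-\eta)$. Then $x_n\in B_{2\rho}(x_0)$ for all $n\ge0$, and for every solution $\hat x$ of $F(x)=y$ with $\hat x\in B_{2\rho}(x_0)\cap\mathrm{dom}(\mathcal R)$, setting $\Delta_n:=D_{\mathcal R}^{\xi_n}(\hat x,x_n)$ and $c_1:=1-\eta-\mu_0/(4\sigma)>0$, one has $\Delta_{n+1}\le\Delta_n-c_1\alpha_n\|F(x_n)-y\|^2$ for all $n\ge0$. Consequently $(\Delta_n)$ is monotonically nonincreasing and $\sum_{n=0}^\infty\alpha_n\|F(x_n)-y\|^2<\infty$.
   Context: Setting. Let $X,Y$ be real Hilbert spaces. Let $\mathcal R:X\to(-\infty,\infty]$ be proper, lower semicontinuous and strongly convex with constant $\sigma>0$, i.e. $\mathcal R(t\bar x+(1-t)x)+\sigma t(1-t)\|\bar x-x\|^2\le t\mathcal R(\bar x)+(1-t)\mathcal R(x)$ for all $\bar x,x\in\mathrm{dom}(\mathcal R)$ and $t\in[0,1]$. For $\xi\in\partial\mathcal R(x)$ (subdifferential) the Bregman distance is $D_{\mathcal R}^{\xi}(z,x)=\mathcal R(z)-\mathcal R(x)-\langle\xi,z-x\rangle$. The convex conjugate $\mathcal R^*$ is differentiable with $\|\nabla\mathcal R^*(\bar\xi)-\nabla\mathcal R^*(\xi)\|\le\|\bar\xi-\xi\|/(2\sigma)$, and $\nabla\mathcal R^*(\xi)=\arg\min_{x\in X}\{\mathcal R(x)-\langle\xi,x\rangle\}$ (unique minimizer), with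 $\xi\in\partial\mathcal R(\nabla\mathcal R^*(\xi))$. Let $F:\mathrm{dom}(F)\subset X\to Y$ and $y\in Y$. Assume: (b) there are $\rho>0$, $x_0\in X$, $\xi_0\in\partial\mathcal R(x_0)$ with $B_{2\rho}(x_0):=\{x:\|x-x_0\|\le 2\rho\}\subset\mathrm{dom}(F)$, and $F(x)=y$ has a solution $\bar x$ with $D_{\mathcal R}^{\xi_0}(\bar x,x_0)\le\sigma\rho^2$; (c) $F$ is weakly closed: if $x_n\in\mathrm{dom}(F)$, $x_n\rightharpoonup x$ and $F(x_n)\to v$, then $x\in\mathrm{dom}(F)$ and $F(x)=v$; (d) there are bounded linear operators $L(x):X\to Y$, $x\in B_{2\rho}(x_0)$, with $x\mapsto L(x)$ continuous on $B_{2\rho}(x_0)$, a constant $\eta\in[0,1)$ with $\|F(x)-F(\bar x)-L(\bar x)(x-\bar x)\|\le\eta\|F(x)-F(\bar x)\|$ for all $x,\bar x\in B_{2\rho}(x_0)$, and a constant $L>0$ with $\|L(x)\|\le L$ on $B_{2\rho}(x_0)$. Algorithm 2 (exact data $y$). Parameters: $\beta\in(0,\infty]$, $\mu_0>0$, $\mu_1>0$, and a fixed choice of step-size rule: (constant) $\alpha_n=\mu_0/L^2$, or (adaptive) $\alpha_n=\min\{\mu_0\|r_n\|^2/\|g_n\|^2,\mu_1\}$ if $r_n\ne0$ and $\alpha_n=0$ if $r_n=0$ (with $\mu_0\|r_n\|^2/\|g_n\|^2:=+\infty$ if $g_n=0$). Set $\xi_{-1}=\xi_0$, $x_0=\nabla\mathcal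 R^*(\xi_0)$. For all $n\ge0$ (no stopping): $r_n:=F(x_n)-y$, $g_n:=L(x_n)^*r_n$, $\alpha_n$ by the chosen rule; $m_n:=\xi_n-\xi_{n-1}$; $\tilde\gamma_0:=0$ and for $n\ge1$, $\tilde\gamma_n:=\langle m_n,x_n-x_{n-1}\rangle-(1-\eta)\alpha_{n-1}\|r_{n-1}\|^2+\beta_{n-1}\tilde\gamma_{n-1}$; $\beta_n:=\min\{\max\{0,(\alpha_n\langle g_n,m_n\rangle-2\sigma\tilde\gamma_n)/\|m_n\|^2\},\beta\}$ if $m_n\ne0$ and $\beta_n:=0$ if $m_n=0$; $\xi_{n+1}:=\xi_n-\alpha_ng_n+\beta_nm_n$, $x_{n+1}:=\nabla\mathcal R^*(\xi_{n+1})$. *)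

(* Defs.v *)
From HB Require Import structures.
From mathcomp Require Import all_boot all_order all_algebra.
From mathcomp Require Import all_classical all_reals all_analysis.
Set Implicit Arguments. Unset Strict Implicit. Unset Printing Implicit Defensive.
Import Order.TTheory GRing.Theory Num.Theory.
Local Open Scope ring_scope.

Section Defs.
Variable R : realType.

Section Space.
Variable V : lmodType R.
Variable ip : V -> V -> R.

Definition nrm (v : V) : R := Num.sqrt (ip v v).

Definition ncvg (u : nat -> V) (z : V) : Prop :=
  forall e : R, 0 < e -> exists N : nat, forall n, (N <= n)%N -> nrm (u n - z) < e.
Definition ncauchy (u : nat -> V) : Prop :=
  forall e : R, 0 < e -> exists N : nat, forall n m, (N <= n)%N -> (N <= m)%N ->
    nrm (u n - u m) < e.

Definition wcvg (u : nat -> V) (z : V) : Prop :=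
  forall w : V, forall e : R, 0 < e -> exists N : nat, forall n, (N <= n)%N ->
    `| ip w (u n) - ip w z | < e.

Definition is_hilbert : Prop :=
  [/\ (forall u v, ip u v = ip v u),
      (forall (a : R) u v w, ip (a *: u + v) w = a * ip u w + ip v w),
      (forall u, 0 <= ip u u),
      (forall u, ip u u = 0 -> u = 0)
    & (forall u : nat -> V, ncauchy u -> exists z, ncvg u z)].

Definition cball (c : V) (r : R) : set V := [set z | nrm (z - c) <= r].

(* functionals V -> (-oo, +oo] *)
Definition dom (f : V -> \bar R) : set V := [set z | f z \is a fin_num].

Definition proper_fun (f : V -> \bar R) : Prop :=
  (exists z, f z \is a fin_num) /\ (forall z, f z != -oo%E).

Definition lsc (f : V -> \bar R) : Prop :=
  forall (z : V) (a : R), (a%:E < f z)%E ->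
    exists d : R, 0 < d /\ forall w, nrm (w - z) < d -> (a%:E < f w)%E.

Definition strongly_convex (f : V -> \bar R) (sigma : R) : Prop :=
  forall xb x : V, dom f xb -> dom f x -> forall t : R, 0 <= t <= 1 ->
    (f ((t *: xb + (1 - t) *: x)%R) + (sigma * t * (1 - t) * nrm (xb - x) ^+ 2)%:E
      <= t%:E * f xb + (1 - t)%:E * f x)%E.

Definition subdiff (f : V -> \bar R) (x xi : V) : Prop :=
  dom f x /\ forall z, (f x + (ip xi (z - x))%:E <= f z)%E.

Definition bregman (f : V -> \bar R) (xi z x : V) : \bar R :=
  (f z - f x - (ip xi (z - x))%:E)%E.

(* x is a minimizer of z |-> f z - <xi, z>, i.e. x = grad f^*(xi) *)
Definition is_argmin_lin (f : V -> \bar R) (xi x : V) : Prop :=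
  dom f x /\ forall z, (f x - (ip xi x)%:E <= f z - (ip xi z)%:E)%E.

End Space.

Definition cap_beta (q : R) (beta : \bar R) : R :=
  match beta with
  | EFin b => Num.min (Num.max 0 q) b
  | _ => Num.max 0 q
  end.

(* adaptive step size; mu0 |r|^2/|g|^2 := +oo when g = 0 *)
Definition step_adapt (X Y : lmodType R) (ipX : X -> X -> R) (ipY : Y -> Y -> R)
  (mu0 mu1 : R) (r : Y) (g : X) : R :=
  if r == 0 then 0
  else if g == 0 then mu1
  else Num.min (mu0 * nrm ipY r ^+ 2 / nrm ipX g ^+ 2) mu1.

(* m_n := xi_n - xi_{n-1} with xi_{-1} := xi_0, so m_0 = 0 *)
Definition mom (X : lmodType R) (xi : nat -> X) (n : nat) : X :=
  if n is k.+1 then xi n - xi k else 0.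

End Defs.

(* Main.v *)
Require Import Defs.
From HB Require Import structures.
From mathcomp Require Import all_boot all_order all_algebra.
From mathcomp Require Import all_classical all_reals all_analysis.
From mathcomp Require Import ring lra.
Import Order.TTheory GRing.Theory Num.Theory.
Set Implicit Arguments. Unset Strict Implicit.
Local Open Scope ring_scope.


Section IP.
Variables (R : realType) (V : lmodType R) (ip : V -> V -> R).
Hypothesis H : is_hilbert ip.

Lemma ipC u v : ip u v = ip v u. Proof. by case: H => h *; apply: h. Qed.
Lemma ip_lin a u v w : ip (a *: u + v) w = a * ip u w + ip v w. Proof. by case: H => _ h *; apply: h. Qed.
Lemma ip_ge0 u : 0 <= ip u u. Proof. by case: H => _ _ h *; apply: h. Qed.
Lemma ip_eq0 u : ip u u = 0 -> u = 0. Proof. by case: H => _ _ _ h *; apply: h. Qed.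

Lemma ip0l w : ip 0 w = 0.
Proof. have := ip_lin 1 0 0 w; rewrite scaler0 addr0 mul1r. lra. Qed.
Lemma ipDl u v w : ip (u + v) w = ip u w + ip v w.
Proof. by rewrite -[u]scale1r ip_lin mul1r scale1r. Qed.
Lemma ipZl a u w : ip (a *: u) w = a * ip u w.
Proof. by rewrite -[a *: u]addr0 ip_lin ip0l addr0. Qed.
Lemma ipNl u w : ip (- u) w = - ip u w.
Proof. by rewrite -scaleN1r ipZl mulN1r. Qed.
Lemma ipBl u v w : ip (u - v) w = ip u w - ip v w.
Proof. by rewrite ipDl ipNl. Qed.
Lemma ip0r w : ip w 0 = 0. Proof. by rewrite ipC ip0l. Qed.
Lemma ipDr u v w : ip w (u + v) = ip w u + ip w v.
Proof. by rewrite ipC ipDl !(ipC w). Qed.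
Lemma ipZr a u w : ip w (a *: u) = a * ip w u.
Proof. by rewrite ipC ipZl ipC. Qed.
Lemma ipNr u w : ip w (- u) = - ip w u.
Proof. by rewrite ipC ipNl ipC. Qed.
Lemma ipBr u v w : ip w (u - v) = ip w u - ip w v.
Proof. by rewrite ipDr ipNr. Qed.

Lemma nrm2 u : nrm ip u ^+ 2 = ip u u.
Proof. by rewrite /nrm sqr_sqrtr // ip_ge0. Qed.
Lemma nrm_ge0 u : 0 <= nrm ip u.
Proof. exact: sqrtr_ge0. Qed.

Lemma young2 t u v : 2 * t * ip u v <= t ^+ 2 * ip u u + ip v v.
Proof.
have := ip_ge0 (t *: u - v).
rewrite !ipBl !ipBr !ipZl !ipZr (ipC v u). nra.
Qed.

Lemma young4 s u v : 0 < s -> ip u v - s * ip v v <= ip u u / (4 * s).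
Proof.
move=> s0; have := young2 (2 * s) v u; rewrite (ipC v u) => h.
rewrite ler_pdivlMr; last lra.
nra.
Qed.

Lemma CS u v : ip u v <= nrm ip u * nrm ip v.
Proof.
have [->|u0] := eqVneq u 0; first by rewrite ip0l /nrm ip0l sqrtr0 mul0r.
have [->|v0] := eqVneq v 0; first by rewrite ip0r /nrm ip0r sqrtr0 mulr0.
have nu : 0 < nrm ip u.
  rewrite lt_def nrm_ge0 andbT; apply/eqP => h.
  apply: (negP u0); apply/eqP; apply: ip_eq0; by rewrite -nrm2 h expr0n.
have nv : 0 < nrm ip v.
  rewrite lt_def nrm_ge0 andbT; apply/eqP => h.
  apply: (negP v0); apply/eqP; apply: ip_eq0; by rewrite -nrm2 h expr0n.
have := young2 (nrm ip v / nrm ip u) u v.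
rewrite -!nrm2 expr_div_n => h.
have e : (nrm ip v ^+ 2 / nrm ip u ^+ 2) * nrm ip u ^+ 2 = nrm ip v ^+ 2.
  by rewrite divfK // expf_neq0 // gt_eqF.
rewrite e in h.
have : 2 * (nrm ip v / nrm ip u) * ip u v * (nrm ip u / (2 * nrm ip v))
   <= (nrm ip v ^+ 2 + nrm ip v ^+ 2) * (nrm ip u / (2 * nrm ip v)).
  by rewrite ler_wpM2r // divr_ge0 // ?mulr_ge0 // ltW.
have -> : 2 * (nrm ip v / nrm ip u) * ip u v * (nrm ip u / (2 * nrm ip v)) = ip u v.
  field; rewrite !gt_eqF //.
have -> : (nrm ip v ^+ 2 + nrm ip v ^+ 2) * (nrm ip u / (2 * nrm ip v)) = nrm ip u * nrm ip v.
  field; rewrite !gt_eqF //.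
by [].
Qed.

Lemma paral u v : ip (u + v) (u + v) <= 2 * ip u u + 2 * ip v v.
Proof.
have := ip_ge0 (u - v).
rewrite !ipBl !ipBr !ipDl !ipDr (ipC v u). lra.
Qed.

Lemma nrm_le u c : 0 <= c -> ip u u <= c ^+ 2 -> nrm ip u <= c.
Proof.
move=> c0; rewrite -nrm2 => h; have := nrm_ge0 u. nra.
Qed.

End IP.


Lemma lim_t (R : realType) (A K : R) : 0 <= A ->
  (forall t, 0 < t < 1 -> (1 - t) * A <= K) -> A <= K.
Proof.
move=> A0 key; rewrite leNgt; apply/negP => KA.
have K0 : A / 2 <= K.
  have := key (1/2); rewrite (_ : 1 - 1/2 = 1/2 :> R); last by field.
  move=> h; have := h ltac:(lra). lra.
have Ap : 0 < A by lra.
have := key ((A - K) / (2 * A)).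
have -> : (1 - (A - K) / (2 * A)) * A = (A + K) / 2.
  by field; rewrite gt_eqF.
have t0 : 0 < (A - K) / (2 * A) by rewrite divr_gt0 //; lra.
have t1 : (A - K) / (2 * A) < 1 by rewrite ltr_pdivrMr; lra.
move=> /(_ ltac:(by rewrite t0 t1)). lra.
Qed.

Lemma sc_argmin (R : realType) (V : lmodType R) (ip : V -> V -> R) (f : V -> \bar R) s
  (H : is_hilbert ip) (Hs : 0 < s) (Hp : proper_fun f) (Hc : strongly_convex ip f s)
  xi xs z a b : is_argmin_lin ip f xi xs -> f z = a%:E -> f xs = b%:E ->
  s * ip (z - xs) (z - xs) <= a - b - ip xi (z - xs).
Proof.
move=> [dxs Hm] Ez Exs.
apply: lim_t; first by apply: mulr_ge0; [exact: ltW|exact: (ip_ge0 H)].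
move=> t /andP[t0 t1].
have dz : dom f z by rewrite /dom /= Ez.
have t01 : 0 <= t <= 1 by rewrite !ltW.
have := Hc z xs dz dxs t t01.
set w := t *: z + (1 - t) *: xs.
rewrite Ez Exs (nrm2 H) -!EFinM -EFinD.
case Ew : (f w) => [c| |].
- rewrite -EFinD lee_fin => h1.
  have := Hm w; rewrite Ew Exs -!EFinB lee_fin => h2.
  rewrite /w (ipDr H) !(ipZr H) in h2.
  have : t * ((1 - t) * (s * ip (z - xs) (z - xs))) <= t * (a - b - ip xi (z - xs)).
    rewrite [ip xi _](ipBr H); nra.
  by rewrite (ler_pM2l t0).
- by rewrite (@addye R) // leye_eq.
- by have [_ /(_ w)] := Hp; rewrite Ew.
Qed.


Lemma cap_ok (R : realType) (q : R) (b : \bar R) : (0 < b)%E ->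
  0 <= cap_beta q b /\ cap_beta q b <= Num.max 0 q.
Proof.
case: b => [b'| |] //= hb; last by rewrite le_max lexx.
rewrite lte_fin in hb.
rewrite ge_min lexx /= le_min le_max lexx /= ltW //.
Qed.

Lemma nrmN (R : realType) (V : lmodType R) (ip : V -> V -> R) (H : is_hilbert ip) u :
  nrm ip (- u) = nrm ip u.
Proof. by rewrite /nrm (ipNl H) (ipNr H) opprK. Qed.

Lemma tc_bound (R : realType) (Y : lmodType R) (ip : Y -> Y -> R) (H : is_hilbert ip)
  (eta : R) (y Fx Lh : Y) : 0 <= eta ->
  nrm ip (y - Fx - Lh) <= eta * nrm ip (y - Fx) ->
  ip (Fx - y) Lh <= - (1 - eta) * ip (Fx - y) (Fx - y).
Proof.
move=> e0 h.
have eL : Lh = (y - Fx) - (y - Fx - Lh) by rewrite opprB addrC subrK.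
set e := y - Fx - Lh in h eL.
rewrite eL (ipBr H).
have ey : y - Fx = - (Fx - y) by rewrite opprB.
rewrite ey (ipNr H) in h eL *.
rewrite (nrmN H) in h.
have cs := CS H (- (Fx - y)) e.
rewrite (ipNl H) (nrmN H) in cs.
have n0 := nrm_ge0 ip (Fx - y).
have ne0 := nrm_ge0 ip e.
have n2 := nrm2 H (Fx - y).
nra.
Qed.

Lemma step_adapt_ok (R : realType) (X Y : lmodType R) (ipX : X -> X -> R) (ipY : Y -> Y -> R)
  (HX : is_hilbert ipX) (HY : is_hilbert ipY) mu0 mu1 (r : Y) (g : X) :
  0 < mu0 -> 0 < mu1 ->
  0 <= step_adapt ipX ipY mu0 mu1 r g /\
  step_adapt ipX ipY mu0 mu1 r g * ipX g g <= mu0 * ipY r r.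
Proof.
move=> m0 m1; rewrite /step_adapt.
have r0 := ip_ge0 HY r.
case: eqP => [_|rn0]; first by rewrite mul0r mulr_ge0 // ltW.
case: eqP => [->|gn0]; first by rewrite (ip0l HX) mulr0 mulr_ge0 // ltW.
have G0 : 0 < ipX g g.
  rewrite lt_def (ip_ge0 HX) andbT; apply/eqP => h; apply: gn0; exact: (ip_eq0 HX).
rewrite !(nrm2 HX) !(nrm2 HY).
split.
  rewrite le_min; apply/andP; split; last exact: ltW.
  by apply: divr_ge0; [apply: mulr_ge0; [exact: ltW|exact: (ip_ge0 HY)]|exact: (ip_ge0 HX)].
rewrite -ler_pdivlMr //.
by rewrite ge_min lexx.
Qed.

Set Implicit Arguments. Unset Strict Implicit.

Lemma series_fin (R: realType) (a: nat -> R) B: (forall n, 0 <= a n) ->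
  (forall N, \sum_(0 <= n < N) a n <= B) -> (\sum_(0<=n<oo) (a n)%:E < +oo)%E.
Proof.
move=> a0 aB.
apply: (@le_lt_trans _ _ B%:E); last by rewrite ltry.
apply: lime_le; first by apply: is_cvg_nneseries => n _ _; rewrite lee_fin.
apply: nearW => N /=.
by rewrite -EFin_sum_fine //= lee_fin.
Qed.

Unset Implicit Arguments. Set Strict Implicit.
Theorem mainTheorem5
  (R : realType) (X Y : lmodType R)
  (ipX : X -> X -> R) (ipY : Y -> Y -> R)
  (Rf : X -> \bar R) (sigma : R)
  (domF : set X) (F : X -> Y) (y : Y)
  (rho : R) (x0 xi0 : X)
  (L : X -> X -> Y) (eta Lc : R)
  (beta : \bar R) (mu0 mu1 : R) (adaptive : bool)
  (x xi g : nat -> X) (alpha bet gam : nat -> R)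
  (* Setting: Hilbert spaces, R proper lsc sigma-strongly convex *)
  (HX : is_hilbert ipX) (HY : is_hilbert ipY)
  (Hsigma : 0 < sigma) (HRprop : proper_fun Rf) (HRlsc : lsc ipX Rf)
  (HRconv : strongly_convex ipX Rf sigma)
  (* (b) *)
  (Hrho : 0 < rho) (Hxi0 : subdiff ipX Rf x0 xi0)
  (HBdom : forall z, cball ipX x0 (2 * rho) z -> domF z)
  (Hsol : exists xb, domF xb /\ F xb = y /\
            (bregman ipX Rf xi0 xb x0 <= (sigma * rho ^+ 2)%:E)%E)
  (* (c) weak closedness *)
  (HFweak : forall (u : nat -> X) (z : X) (v : Y), (forall n, domF (u n)) ->
            wcvg ipX u z -> ncvg ipY (fun n => F (u n)) v -> domF z /\ F z = v)
  (* (d) *)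
  (HLlin : forall z, cball ipX x0 (2 * rho) z ->
            forall (a : R) h k, L z (a *: h + k) = a *: L z h + L z k)
  (HLcont : forall z, cball ipX x0 (2 * rho) z -> forall e : R, 0 < e ->
            exists d : R, 0 < d /\ forall w, cball ipX x0 (2 * rho) w ->
              nrm ipX (w - z) < d -> forall h, nrm ipY (L w h - L z h) <= e * nrm ipX h)
  (Heta : 0 <= eta < 1)
  (Htcc : forall z zb, cball ipX x0 (2 * rho) z -> cball ipX x0 (2 * rho) zb ->
            nrm ipY (F z - F zb - L zb (z - zb)) <= eta * nrm ipY (F z - F zb))
  (HLc : 0 < Lc)
  (HLbd : forall z, cball ipX x0 (2 * rho) z -> forall h, nrm ipY (L z h) <= Lc * nrm ipX h)
  (* parameters *)
  (Hbeta : (0 < beta)%E) (Hmu0 : 0 < mu0) (Hmu1 : 0 < mu1)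
  (Hmu0s : mu0 < 4 * sigma * (1 - eta))
  (* Algorithm 2 with exact data y *)
  (Halg_xi0 : xi 0 = xi0) (Halg_x0 : x 0 = x0)
  (Halg_x : forall n, is_argmin_lin ipX Rf (xi n) (x n))
  (Halg_g : forall n h, ipX (g n) h = ipY (F (x n) - y) (L (x n) h))
  (Halg_alpha : forall n, alpha n =
      if adaptive then step_adapt ipX ipY mu0 mu1 (F (x n) - y) (g n)
      else mu0 / Lc ^+ 2)
  (Halg_gam0 : gam 0 = 0)
  (Halg_gam : forall n, gam n.+1 =
      ipX (mom xi n.+1) (x n.+1 - x n)
      - (1 - eta) * alpha n * nrm ipY (F (x n) - y) ^+ 2 + bet n * gam n)
  (Halg_bet : forall n, bet n =
      if mom xi n == 0 then 0
      else cap_beta ((alpha n * ipX (g n) (mom xi n) - 2 * sigma * gam n)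
                       / nrm ipX (mom xi n) ^+ 2) beta)
  (Halg_xi : forall n, xi n.+1 = xi n - alpha n *: g n + bet n *: mom xi n) :
  (forall n, cball ipX x0 (2 * rho) (x n)) /\
  forall xh : X, domF xh -> F xh = y -> cball ipX x0 (2 * rho) xh -> dom Rf xh ->
    let Delta := fun n => bregman ipX Rf (xi n) xh (x n) in
    let c1 := 1 - eta - mu0 / (4 * sigma) in
    [/\ 0 < c1,
        (forall n, (Delta n.+1 <= Delta n
                     - (c1 * alpha n * nrm ipY (F (x n) - y) ^+ 2)%:E)%E),
        (forall n, (Delta n.+1 <= Delta n)%E)
      & (\sum_(0 <= n <oo) (alpha n * nrm ipY (F (x n) - y) ^+ 2)%:E < +oo)%E].
Proof.
have s4 : 0 < 4 * sigma by rewrite mulr_gt0.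
have c1pos : 0 < 1 - eta - mu0 / (4 * sigma).
  rewrite subr_gt0 ltr_pdivrMr //; nra.
set c1 := 1 - eta - mu0 / (4 * sigma).
have [eta0 eta1] : 0 <= eta /\ eta < 1 by case/andP: Heta.
have Efx : forall n, Rf (x n) = (fine (Rf (x n)))%:E.
  by move=> n; rewrite fineK //; case: (Halg_x n).
have Ha0 : forall n, 0 <= alpha n.
  move=> n; rewrite Halg_alpha; case: ifP => _.
  - by case: (@step_adapt_ok _ _ _ _ _ HX HY mu0 mu1 (F (x n) - y) (g n) Hmu0 Hmu1).
  - by apply: divr_ge0; [exact: ltW | apply: exprn_ge0; exact: ltW].
have HaG : forall n, cball ipX x0 (2 * rho) (x n) ->
    alpha n * ipX (g n) (g n) <= mu0 * ipY (F (x n) - y) (F (x n) - y).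
  move=> n bn; rewrite Halg_alpha; case: ifP => _.
  - by case: (@step_adapt_ok _ _ _ _ _ HX HY mu0 mu1 (F (x n) - y) (g n) Hmu0 Hmu1).
  - have hg : ipX (g n) (g n) <= Lc ^+ 2 * ipY (F (x n) - y) (F (x n) - y).
      have e1 := Halg_g n (g n).
      have cs := CS HY (F (x n) - y) (L (x n) (g n)).
      have lb := HLbd _ bn (g n).
      have ng := nrm_ge0 ipX (g n).
      have nr := nrm_ge0 ipY (F (x n) - y).
      rewrite -(nrm2 HX) -(nrm2 HY).
      rewrite -(nrm2 HX) in e1.
      have h1 : nrm ipX (g n) ^+ 2 <= nrm ipY (F (x n) - y) * (Lc * nrm ipX (g n)).
        by rewrite e1 (le_trans cs) // ler_wpM2l.
      have [hle|hlt] := leP (nrm ipX (g n)) (Lc * nrm ipY (F (x n) - y)); nra.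
    apply: (le_trans (ler_wpM2l _ hg)); first by apply: divr_ge0; [exact: ltW | apply: exprn_ge0; exact: ltW].
    by rewrite mulrA divfK // expf_neq0 // gt_eqF.
have Hb0 : forall n, 0 <= bet n.
  move=> n; rewrite Halg_bet; case: ifP => // _.
  by case: (cap_ok ((alpha n * ipX (g n) (mom xi n) - 2 * sigma * gam n) / nrm ipX (mom xi n) ^+ 2) Hbeta).
have Hbq : forall n, bet n * (bet n * ipX (mom xi n) (mom xi n)
     - 2 * (alpha n * ipX (g n) (mom xi n)) + 4 * sigma * gam n) <= 0.
  move=> n; rewrite Halg_bet; case: ifP => [_|/negbT mn0]; first by rewrite mul0r.
  set q := (_ / _).
  have [b0 bq] := cap_ok q Hbeta.
  set b := cap_beta q beta in b0 bq *.
  have M0 : 0 < ipX (mom xi n) (mom xi n).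
    rewrite lt_def (ip_ge0 HX) andbT; apply/eqP => h; apply: (negP mn0); apply/eqP.
    exact: (ip_eq0 HX).
  have eq : q * ipX (mom xi n) (mom xi n) = alpha n * ipX (g n) (mom xi n) - 2 * sigma * gam n.
    by rewrite /q (nrm2 HX) divfK // gt_eqF.
  have [hq|hq] := leP q 0.
  - have : Num.max 0 q = 0 by apply/max_idPl.
    move=> e; rewrite e in bq; have -> : b = 0 by apply/le_anti; rewrite bq b0.
    by rewrite mul0r.
  - have : Num.max 0 q = q by apply/max_idPr; rewrite ltW.
    move=> e; rewrite e in bq.
    have e2 : alpha n * ipX (g n) (mom xi n) =
         q * ipX (mom xi n) (mom xi n) + 2 * sigma * gam n by rewrite eq; ring.
    have -> : b * ipX (mom xi n) (mom xi n) - 2 * (alpha n * ipX (g n) (mom xi n)) + 4 * sigma * gam n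
      = ipX (mom xi n) (mom xi n) * (b - 2 * q) by rewrite e2; ring.
    rewrite mulrA; apply: mulr_ge0_le0; first by rewrite mulr_ge0 // ltW.
    lra.
have Htc : forall n xh, cball ipX x0 (2 * rho) (x n) -> cball ipX x0 (2 * rho) xh ->
    F xh = y -> ipX (g n) (xh - x n) <= - (1 - eta) * ipY (F (x n) - y) (F (x n) - y).
  move=> n xh bn bh Fh; rewrite Halg_g; apply: (tc_bound HY) => //.
  by have := Htcc _ _ bh bn; rewrite Fh.
have step : forall xh fh, F xh = y -> cball ipX x0 (2 * rho) xh -> Rf xh = fh%:E ->
   forall n, cball ipX x0 (2 * rho) (x n) -> ipX (mom xi n) (x n - xh) <= gam n ->
   ipX (mom xi n.+1) (x n.+1 - xh) <= gam n.+1 /\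
   fh - fine (Rf (x n.+1)) - ipX (xi n.+1) (xh - x n.+1) <=
   fh - fine (Rf (x n)) - ipX (xi n) (xh - x n)
     - c1 * alpha n * ipY (F (x n) - y) (F (x n) - y).
  move=> xh fh Fh bh Eh n bn Pn.
  have hd : forall v, ipX (xi n.+1 - xi n) v =
      - (alpha n * ipX (g n) v) + bet n * ipX (mom xi n) v.
    move=> v; rewrite [xi n.+1]Halg_xi (ipBl HX (xi n - alpha n *: g n + bet n *: mom xi n) (xi n) v) (ipDl HX) (ipBl HX) !(ipZl HX); ring.
  have ev : x n.+1 - xh = (x n.+1 - x n) + (x n - xh) by rewrite addrA subrK.
  have eg : ipX (g n) (x n - xh) = - ipX (g n) (xh - x n) by rewrite -(ipNr HX) opprB.
  have t1 := ler_wpM2l (Ha0 n) (Htc n xh bn bh Fh).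
  have t2 := ler_wpM2l (Hb0 n) Pn.
  split.
    rewrite Halg_gam (nrm2 HY) /= ev (ipDr HX) [ipX _ (x n - xh)]hd eg.
    lra.
  have sc1 := sc_argmin HX Hsigma HRprop HRconv (Halg_x n) (Efx n.+1) (Efx n).
  have yg := young4 HX (xi n.+1 - xi n) (x n.+1 - x n) Hsigma.
  have h3 := hd (xh - x n).
  have em : ipX (mom xi n) (xh - x n) = - ipX (mom xi n) (x n - xh)
    by rewrite -(ipNr HX) opprB.
  have eQ : ipX (xi n.+1 - xi n) (xi n.+1 - xi n) =
      alpha n ^+ 2 * ipX (g n) (g n) - 2 * alpha n * bet n * ipX (g n) (mom xi n)
      + bet n ^+ 2 * ipX (mom xi n) (mom xi n).
    rewrite [ipX _ (xi n.+1 - xi n)]hd (ipC HX (g n)) (ipC HX (mom xi n)) !hd.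
    rewrite (ipC HX (mom xi n) (g n)); ring.
  have key : ipX (xi n.+1 - xi n) (xi n.+1 - xi n) / (4 * sigma) + bet n * gam n <=
      mu0 / (4 * sigma) * (alpha n * ipY (F (x n) - y) (F (x n) - y)).
    have -> : ipX (xi n.+1 - xi n) (xi n.+1 - xi n) / (4 * sigma) + bet n * gam n =
      (alpha n * (alpha n * ipX (g n) (g n)) + bet n * (bet n * ipX (mom xi n) (mom xi n)
     - 2 * (alpha n * ipX (g n) (mom xi n)) + 4 * sigma * gam n)) / (4 * sigma).
      by rewrite eQ; field; rewrite gt_eqF.
    have -> : mu0 / (4 * sigma) * (alpha n * ipY (F (x n) - y) (F (x n) - y)) =
      (alpha n * (mu0 * ipY (F (x n) - y) (F (x n) - y))) / (4 * sigma).
      by field; rewrite gt_eqF.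
    rewrite ler_pM2r ?invr_gt0 //.
    have := ler_wpM2l (Ha0 n) (HaG n bn).
    have := Hbq n.
    lra.
  have ec : c1 * alpha n * ipY (F (x n) - y) (F (x n) - y) =
      alpha n * ipY (F (x n) - y) (F (x n) - y)
      - eta * (alpha n * ipY (F (x n) - y) (F (x n) - y))
      - mu0 / (4 * sigma) * (alpha n * ipY (F (x n) - y) (F (x n) - y)).
    by rewrite /c1; ring.
  rewrite ec.
  move: sc1 yg h3 t1 t2 key em.
  rewrite !(ipBr HX) !(ipBl HX).
  lra.
have chain : forall xh fh, F xh = y -> cball ipX x0 (2 * rho) xh -> Rf xh = fh%:E ->
   forall n, (forall k, (k < n)%N -> cball ipX x0 (2 * rho) (x k)) ->
   ipX (mom xi n) (x n - xh) <= gam n /\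
   fh - fine (Rf (x n)) - ipX (xi n) (xh - x n) <=
   fh - fine (Rf (x 0)) - ipX (xi 0) (xh - x 0).
  move=> xh fh Fh bh Eh; elim=> [|n IH] hb.
    by split => //; rewrite /= (ip0l HX) Halg_gam0.
  have [Pn Dn] := IH (fun k hk => hb k (ltnW hk)).
  have [P1 D1] := step xh fh Fh bh Eh n (hb n (ltnSn n)) Pn.
  split => //.
  have : 0 <= c1 * alpha n * ipY (F (x n) - y) (F (x n) - y).
    by rewrite mulr_ge0 ?(ip_ge0 HY) // mulr_ge0 // ltW.
  lra.
have [xb [dxb [Fxb Hbr]]] := Hsol.
have Ex0 := Efx 0; rewrite Halg_x0 in Ex0.
have [fb Efb] : exists fb, Rf xb = fb%:E.
  move: Hbr; rewrite /bregman Ex0.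
  case E: (Rf xb) => [fb| |]; first by exists fb.
  - by rewrite (@addye R) // (@addye R) // leye_eq.
  - by case: HRprop => _ /(_ xb); rewrite E.
have D0b : fb - fine (Rf (x 0)) - ipX (xi 0) (xb - x 0) <= sigma * rho ^+ 2.
  by move: Hbr; rewrite /bregman Efb Ex0 Halg_xi0 Halg_x0 -!EFinB lee_fin.
have bxb : cball ipX x0 (2 * rho) xb.
  have sc := sc_argmin HX Hsigma HRprop HRconv (Halg_x 0) Efb (Efx 0).
  rewrite /cball /=; apply: (nrm_le HX); first by rewrite mulr_ge0 // ltW.
  rewrite -Halg_x0.
  have : ipX (xb - x 0) (xb - x 0) <= rho ^+ 2.
    by rewrite -(ler_pM2l Hsigma); apply: le_trans D0b.
  have := ip_ge0 HX (xb - x 0).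
  nra.
have ballx : forall n k, (k <= n)%N -> cball ipX x0 (2 * rho) (x k).
  elim=> [|n IH] k hk.
    move: hk; rewrite leqn0 => /eqP ->.
    by rewrite /cball /= Halg_x0 subrr /nrm (ip0l HX) sqrtr0 mulr_ge0 // ltW.
  move: hk; rewrite leq_eqVlt => /orP [/eqP ->|hk]; last exact: IH k hk.
  have [_ Dn] := chain xb fb Fxb bxb Efb n.+1 (fun k hk => IH k hk).
  have sc := sc_argmin HX Hsigma HRprop HRconv (Halg_x n.+1) Efb (Efx n.+1).
  have q1 : ipX (xb - x n.+1) (xb - x n.+1) <= rho ^+ 2.
    rewrite -(ler_pM2l Hsigma); apply: (le_trans sc); apply: (le_trans Dn).
    exact: D0b.
  have q0 : ipX (xb - x0) (xb - x0) <= rho ^+ 2.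
    rewrite -(ler_pM2l Hsigma).
    have sc0 := sc_argmin HX Hsigma HRprop HRconv (Halg_x 0) Efb (Efx 0).
    move: sc0 D0b; rewrite Halg_x0 Halg_xi0; apply: le_trans.
  have pq := paral HX (x n.+1 - xb) (xb - x0).
  rewrite addrA subrK in pq.
  have ee : ipX (x n.+1 - xb) (x n.+1 - xb) = ipX (xb - x n.+1) (xb - x n.+1).
    by rewrite -opprB (ipNl HX) (ipNr HX) opprK.
  rewrite /cball /=; apply: (nrm_le HX); first by rewrite mulr_ge0 // ltW.
  rewrite ee in pq.
  nra.
split. { intros k0. exact: (ballx k0 k0 (leqnn k0)). }
move=> xh _ Fh bh dRh.
cbv zeta; rewrite -/c1.
have allb : forall k, cball ipX x0 (2 * rho) (x k) by move=> k; exact: (ballx k k (leqnn k)).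
have Eh : Rf xh = (fine (Rf xh))%:E by rewrite fineK.
set fh := fine (Rf xh) in Eh.
have ED : forall k, bregman ipX Rf (xi k) xh (x k) =
    (fh - fine (Rf (x k)) - ipX (xi k) (xh - x k))%:E.
  by move=> k; rewrite /bregman Eh (Efx k) -!EFinB.
have allP := fun k => chain xh fh Fh bh Eh k (fun j _ => allb j).
have desc := fun k => (step xh fh Fh bh Eh k (allb k) (allP k).1).2.
have pos : forall k, 0 <= c1 * alpha k * ipY (F (x k) - y) (F (x k) - y).
  by move=> k; rewrite mulr_ge0 ?(ip_ge0 HY) // mulr_ge0 // ltW.
have Dge0 : forall k, 0 <= fh - fine (Rf (x k)) - ipX (xi k) (xh - x k).
  move=> k; have sc := sc_argmin HX Hsigma HRprop HRconv (Halg_x k) Eh (Efx k).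
  apply: le_trans sc; apply: mulr_ge0; [exact: ltW | exact: (ip_ge0 HX)].
split => //.
- by move=> k; rewrite !ED -EFinB lee_fin (nrm2 HY); exact: desc k.
- move=> k; rewrite !ED lee_fin; have := desc k; have := pos k; lra.
apply: (@series_fin _ _ ((fh - fine (Rf (x 0)) - ipX (xi 0) (xh - x 0)) / c1)).
  by move=> k; rewrite (nrm2 HY) mulr_ge0 ?(ip_ge0 HY).
have tel : forall N, c1 * \sum_(0 <= k < N) (alpha k * nrm ipY (F (x k) - y) ^+ 2) <=
    (fh - fine (Rf (x 0)) - ipX (xi 0) (xh - x 0)) - (fh - fine (Rf (x N)) - ipX (xi N) (xh - x N)).
  elim=> [|N IH]; first by rewrite big_geq // mulr0 subrr.
  rewrite big_nat_recr //= mulrDr (nrm2 HY).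
  have := desc N; rewrite mulrA; lra.
move=> N; rewrite ler_pdivlMr // mulrC.
have := tel N; have := Dge0 N; lra.
Qed.
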